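(* Let $N\ge1$ be an integer, let $\alpha>-1$ be real, and for $z\in\mathbb{C}\setminus\{0\}$ define $$H(z,N,\alpha)=\frac{\Gamma(N+1)}{(\alpha+2)_N}\sum_{m=0}^{N-1}\frac{(\alpha+1)_m}{m!}\,z^{-m}.$$ Then $$H(z,N,\alpha)=\frac{N}{N+\alpha+1}\,z^{1-N}\,{}_2F_1\!\left(\begin{matrix}1-N,\ 1\\ \alpha+2\end{matrix};1-z\right).$$
   Context: $(a)_k=a(a+1)\cdots(a+k-1)$ is the Pochhammer symbol, $(a)_0=1$. ${}_2F_1\!\left(\begin{matrix}1-N,1\\ c\end{matrix};u\right)=\sum_{k=0}^{N-1}\frac{(1-N)_k(1)_k}{(c)_k\,k!}u^k$ (a polynomial in $u$). $H(z,N,\alpha)$ is the $z$-transform of the zeroth-order orthogonal (Hahn, with $\beta=0$) low-pass filter with impulse response $\frac{\Gamma(N+1)}{(\alpha+2)_N}\frac{(\alpha+1)_m}{m!}$, $0\le m\le N-1$. *)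

(* Defs.v *)
(* complex numbers are R[i] = complex R for a real closed field R
   (e.g. the real numbers); alpha is a real parameter embedded as (alpha%:C)%C. *)
From HB Require Import structures.
From mathcomp Require Import all_boot all_order all_algebra.
From mathcomp Require Import complex.
Set Implicit Arguments. Unset Strict Implicit. Unset Printing Implicit Defensive.
Import Order.TTheory GRing.Theory Num.Theory.
Local Open Scope ring_scope.

Definition poch {F : fieldType} (a : F) (k : nat) : F :=
  \prod_(i < k) (a + i%:R).

Definition hyp2F1_trunc {F : fieldType} (N : nat) (c u : F) : F :=
  \sum_(k < N) (poch (1 - N%:R) k * poch 1 k) / (poch c k * (k`!)%:R) * u ^+ k.

Definition Hfilt {R : rcfType} (z : R[i]) (N : nat) (alpha : R) : R[i] :=
  (N`!)%:R / poch ((alpha%:C)%C + 2) N *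
  \sum_(m < N) poch ((alpha%:C)%C + 1) m / (m`!)%:R * z ^- m.

(* Main.v *)
Require Import Defs.
From HB Require Import structures.
From mathcomp Require Import all_boot all_order all_algebra.
From mathcomp Require Import complex.
From mathcomp Require Import ring lra zify.
Import Order.TTheory GRing.Theory Num.Theory.
Local Open Scope ring_scope.

Section Key.
Variable F : numFieldType.
Variable a : F.
Hypothesis hc : forall i : nat, a + 1 + i%:R != 0.

Let c := a + 1.

Lemma pochS (x : F) k : poch x k.+1 = poch x k * (x + k%:R).
Proof. by rewrite /poch big_ord_recr. Qed.

Lemma pochSl (x : F) k : poch x k.+1 = x * poch (x + 1) k.
Proof.
rewrite /poch big_ord_recl addr0; congr (_ * _); apply: eq_bigr => i _.
by rewrite /bump /= -natr1; ring.
Qed.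

Lemma poch_c_neq0 k : poch c k != 0.
Proof. by rewrite /poch; apply/prodf_neq0 => i _; exact: hc. Qed.

Definition T (n k : nat) : F := poch (- n%:R) k / poch c k.

Lemma T0 n : T n 0 = 1.
Proof. by rewrite /T /poch !big_ord0 divr1. Qed.

Lemma Tnn n : T n n.+1 = 0.
Proof. by rewrite /T pochS addrC subrr mulr0 mul0r. Qed.

Lemma TS n k : T n.+1 k.+1 = n.+1%:R / (c + n%:R) * (T n k.+1 - T n k).
Proof.
have h1 := poch_c_neq0 k.
have h2 : c + k%:R != 0 by exact: hc.
have h3 : c + n%:R != 0 by exact: hc.
rewrite /T (pochSl (- n.+1%:R)) !pochS.
have -> : - n.+1%:R + 1 = - n%:R :> F by rewrite -natr1 opprD addrNK.
rewrite /c; rewrite /c in h1 h2 h3.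
field; rewrite ?h1 ?h2 ?h3 //.
Qed.

Definition q (w : F) n := \sum_(k < n.+1) T n k * w ^+ k.
Definition p (z : F) n := \sum_(m < n.+1) poch a m / (m`!)%:R * z ^+ (n - m).

Lemma q_rec w n :
  q w n.+1 = n.+1%:R / (c + n%:R) * (1 - w) * q w n + a / (c + n%:R).
Proof.
have h3 : c + n%:R != 0 by exact: hc.
have e1 : \sum_(k < n.+1) T n k.+1 * w ^+ k.+1 = q w n - 1.
  rewrite big_ord_recr /= Tnn mul0r addr0 /q big_ord_recl T0 expr0 mulr1.
  by rewrite addrC addKr; apply: eq_bigr.
have e2 : \sum_(k < n.+1) T n k * w ^+ k.+1 = w * q w n.
  by rewrite /q mulr_sumr; apply: eq_bigr => i _; rewrite exprS mulrCA.
rewrite /q big_ord_recl T0 expr0 mulr1.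
have -> : \sum_(i < n.+1) T n.+1 (lift ord0 i) * w ^+ lift ord0 i =
  n.+1%:R / (c + n%:R) * (\sum_(k < n.+1) T n k.+1 * w ^+ k.+1 - \sum_(k < n.+1) T n k * w ^+ k.+1).
  by rewrite -sumrB mulr_sumr; apply: eq_bigr => i _; rewrite lift0 TS; ring.
rewrite e1 e2 -/(q w n).
rewrite /c; rewrite /c in h3; field; done.
Qed.

Lemma p_rec z n : p z n.+1 = z * p z n + poch a n.+1 / (n.+1`!)%:R.
Proof.
rewrite /p big_ord_recr /= subSS subnn expr0 mulr1; congr (_ + _).
rewrite mulr_sumr; apply: eq_bigr => i _.
rewrite mulrCA; congr (_ * _); rewrite -exprS; congr (z ^+ _).
have := ltn_ord i; lia.
Qed.

Lemma key w n : q w n = (n`!)%:R / poch c n * p (1 - w) n.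
Proof.
elim: n => [|n IH].
  by rewrite /q /p !big_ord1 /= T0 /poch !big_ord0 fact0 sub0n !expr0 !mulr1 !divr1 mul1r.
have h1 := poch_c_neq0 n.
have h3 : c + n%:R != 0 by exact: hc.
have hf : (n`!)%:R != 0 :> F by rewrite lt0r_neq0 // ltr0n fact_gt0.
rewrite q_rec IH p_rec pochS pochSl -/c factS natrM.
rewrite /c; rewrite /c in h1 h3.
have hn1 : 1 + n%:R != 0 :> F by rewrite addrC natr1 pnatr_eq0.
by field; rewrite hf hn1 h3 h1.
Qed.

End Key.
Arguments q {F} a w n.
Arguments p {F} a z n.
Arguments T {F} a n k.
Arguments key {F a} hc w n.
Arguments poch_c_neq0 {F a} hc k.


Theorem mainTheorem3 (R : rcfType) (N : nat) (alpha : R) (z : R[i]) :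
  (1 <= N)%N -> -1 < alpha -> z != 0 ->
  Hfilt z N alpha =
  N%:R / (N%:R + (alpha%:C)%C + 1) * z ^ (1 - (N : int)) *
  hyp2F1_trunc N ((alpha%:C)%C + 2) (1 - z).
Proof.
case: N => [//|n] _ ha hz.
set a : R[i] := (alpha%:C)%C + 1.
have hc : forall i : nat, a + 1 + i%:R != 0.
  move=> i; apply: lt0r_neq0.
  have -> : a + 1 + i%:R = ((alpha + 1 + 1 + i%:R)%:C)%C.
    by rewrite /a !rmorphD rmorph1 rmorph_nat.
  rewrite -(rmorph0 (real_complex R)) ltcR.
  have : 0 < alpha + 1 by rewrite -ltrBlDr sub0r.
  move=> h; apply: ltr_wpDr; first by exact: ler0n.
  by apply: ltr_wpDr => //; exact: ler01.
have e2 : (alpha%:C)%C + 2 = a + 1 by rewrite /a -addrA.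
have hyp : hyp2F1_trunc n.+1 (a + 1) (1 - z) = q a (1 - z) n.
  rewrite /hyp2F1_trunc /q; apply: eq_bigr => k _.
  have -> : 1 - n.+1%:R = - n%:R :> R[i] by rewrite -natr1; ring.
  have -> : poch 1 k = (k`!)%:R :> R[i].
    elim: (nat_of_ord k) => [|j IH]; first by rewrite /poch big_ord0.
    by rewrite pochS IH factS natrM mulrC addrC -natr1.
  have hf : (k`!)%:R != 0 :> R[i] by rewrite lt0r_neq0 // ltr0n fact_gt0.
  have hp := poch_c_neq0 hc k.
  by rewrite /T; field; rewrite hf hp.
rewrite e2 hyp key // subKr /Hfilt -/a.
have -> : 1 - (n.+1 : int) = - (n : int).
  by lia.
have h1 := poch_c_neq0 hc n.
have h3 : a + 1 + n%:R != 0 by exact: hc.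
have hf : (n`!)%:R != 0 :> R[i] by rewrite lt0r_neq0 // ltr0n fact_gt0.
rewrite pochS factS natrM.
have -> : \sum_(m < n.+1) poch a m / (m`!)%:R * z ^- m = z ^ (- (n : int)) * p a z n.
  rewrite /p mulr_sumr; apply: eq_bigr => i _.
  have hf' : (i`!)%:R != 0 :> R[i] by rewrite lt0r_neq0 // ltr0n fact_gt0.
  have hi : (i <= n)%N by rewrite -ltnS.
  have ez : z ^+ n = z ^+ i * z ^+ (n - i) by rewrite -exprD subnKC.
  have hzi : z ^+ i != 0 by rewrite expf_neq0.
  have hzn : z ^+ (n - i) != 0 by rewrite expf_neq0.
  rewrite -exprnN ez; field; rewrite hzi hzn hf' //.
have -> : n.+1%:R + (alpha%:C)%C + 1 = a + 1 + n%:R :> R[i].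
  by rewrite /a -natr1; ring.
rewrite !e2; field; rewrite ?h1 ?h3 ?hf //.
Qed.
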